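(* Let $\omega=t_1\pi_1+\dots+t_m\pi_m$ be a formal real linear combination of $k$-permutations. If $\sum_{i\in[m]}t_iP_{\pi_i}=0$, then the cover matrix $\mathrm{Cov}(\omega)$ is constant (all its entries are equal).
   Context: A $k$-permutation is a bijection of $[k]=\{1,\dots,k\}$. The gradient polynomial of a $k$-permutation $\pi$ is $P_\pi(\alpha,\beta)=k!\sum_{m\in[k]}\left(\frac{k-m}{1-\alpha}-\frac{m-1}{\alpha}\right)\left(\frac{k-\pi(m)}{1-\beta}-\frac{\pi(m)-1}{\beta}\right)\frac{\alpha^{m-1}(1-\alpha)^{k-m}\beta^{\pi(m)-1}(1-\beta)^{k-\pi(m)}}{(m-1)!(k-m)!(\pi(m)-1)!(k-\pi(m))!}$. The permutation matrix $A_\pi\in\mathbb{R}^{k\times k}$ has $(A_\pi)_{i,j}=1$ if $\pi(i)=j$ and $0$ otherwise, and the cover matrix of $\omega=\sum_i t_i\pi_i$ is $\mathrm{Cov}(\omega)=\sum_i t_iA_{\pi_i}$. *)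

(* Defs.v *)
From HB Require Import structures.
From mathcomp Require Import all_boot all_order all_algebra all_fingroup.
From mathcomp Require Import reals.
Set Implicit Arguments. Unset Strict Implicit. Unset Printing Implicit Defensive.
Import Order.TTheory GRing.Theory Num.Theory.
Local Open Scope ring_scope.

(* k-permutations are elements of 'S_k (permutations of 'I_k = {0,...,k-1});
   the paper's index m in [k] corresponds to i : 'I_k with m = i + 1, and
   pi(m) corresponds to (pi i) + 1. *)

(* Gradient polynomial P_pi(alpha, beta), written literally as in the paper. *)
Definition gradP (R : realType) (k : nat) (pi : 'S_k) (a b : R) : R :=
  (k`!)%:R * \sum_(i < k)
    (((k - i.+1)%:R / (1 - a) - (i.+1 - 1)%:R / a) *
     ((k - (pi i).+1)%:R / (1 - b) - ((pi i).+1 - 1)%:R / b) *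
     (a ^+ (i.+1 - 1) * (1 - a) ^+ (k - i.+1) *
      b ^+ ((pi i).+1 - 1) * (1 - b) ^+ (k - (pi i).+1)) /
     ((i.+1 - 1)`!%:R * (k - i.+1)`!%:R *
      ((pi i).+1 - 1)`!%:R * (k - (pi i).+1)`!%:R)).

Definition permMx (R : realType) (k : nat) (pi : 'S_k) : 'M[R]_k :=
  \matrix_(i < k, j < k) (if pi i == j then 1 else 0).

Definition coverMx (R : realType) (k m : nat) (t : 'I_m -> R) (pis : 'I_m -> 'S_k)
  : 'M[R]_k := \sum_(l < m) t l *: @permMx R k (pis l).

(* Main.v *)
Require Import Defs.
From HB Require Import structures.
From mathcomp Require Import all_boot all_order all_algebra all_fingroup.
From mathcomp Require Import reals.
From mathcomp Require Import ring lra zify.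
Import Order.TTheory GRing.Theory Num.Theory.
Local Open Scope ring_scope.

Definition Gf {R : realFieldType} n (a : R) i := (n - i)%:R / (1 - a) * (a ^+ i * (1 - a) ^+ (n - i)) / (i`!%:R * (n - i)`!%:R).
Definition Hf {R : realFieldType} n (a : R) i := i%:R / a * (a ^+ i * (1 - a) ^+ (n - i)) / (i`!%:R * (n - i)`!%:R).
Definition dd {R : realFieldType} n (a : R) i := ((n - i)%:R / (1 - a) - i%:R / a) * (a ^+ i * (1 - a) ^+ (n - i)) / (i`!%:R * (n - i)`!%:R).

Lemma fact_neq0 {R : realFieldType} m : (m`!%:R : R) != 0.
Proof. by rewrite pnatr_eq0 -lt0n fact_gt0. Qed.

Lemma HG {R : realFieldType} n (a : R) i : a != 0 -> 1 - a != 0 -> (i < n)%N -> Hf n a i.+1 = Gf n a i.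
Proof.
move=> a0 a1 lt; rewrite /Hf /Gf.
have [r ->] : exists r, n = (i + r.+1)%N by exists (n - i.+1)%N; lia.
have -> : (i + r.+1 - i.+1 = r)%N by lia.
have -> : (i + r.+1 - i = r.+1)%N by lia.
have f1 := fact_neq0 i; have f2 := fact_neq0 r.
have n1 : 1 + (i%:R : R) != 0 by rewrite addrC natr1 pnatr_eq0.
have n2 : 1 + (r%:R : R) != 0 by rewrite addrC natr1 pnatr_eq0.
rewrite !factS !natrM !exprS.
field.
by rewrite f1 f2 a0 a1 n1 n2.
Qed.

Lemma Lsum {R : realFieldType} n (c : nat -> R) (a : R) : a != 0 -> 1 - a != 0 ->
  \sum_(i < n.+1) c i * dd n a i = \sum_(i < n) (c i - c i.+1) * Gf n a i.
Proof.
move=> a0 a1.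
have E : forall i, dd n a i = Gf n a i - Hf n a i.
  by move=> i; rewrite /dd /Gf /Hf !mulrBl.
under eq_bigr do rewrite E mulrBr.
rewrite sumrB big_ord_recr big_ord_recl /=.
have -> : Gf n a n = 0 by rewrite /Gf subnn !mul0r.
have -> : Hf n a 0 = 0 by rewrite /Hf !mul0r.
rewrite mulr0 addr0 mulr0 add0r.
rewrite -sumrB; apply: eq_bigr => i _.
by rewrite /bump /= add1n HG // mulrBl.
Qed.

Lemma GK {R : realFieldType} n (a : R) i : a != 0 -> 1 - a != 0 -> (i <= n)%N ->
  Gf n.+1 a i = ((n.+1 - i)%:R / (i`!%:R * (n.+1 - i)`!%:R)) * (a ^+ i * (1 - a) ^+ (n - i)).
Proof.
move=> a0 a1 le; rewrite /Gf subSn // exprS.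
field; by rewrite ?mulf_neq0 ?fact_neq0.
Qed.

Lemma bern_indep {R : realFieldType} n (e : nat -> R) :
  (forall a : R, 0 < a < 1 -> \sum_(i < n.+1) e i * (a ^+ i * (1 - a) ^+ (n - i)) = 0) ->
  forall i, (i <= n)%N -> e i = 0.
Proof.
move=> H.
pose P := \poly_(i < n.+1) e i.
have HP : forall x : R, 0 < x -> P.[x] = 0.
  move=> x x0.
  have x1 : 0 < 1 + x by lra.
  have x1n : 1 + x != 0 by rewrite gt_eqF.
  have ha : 0 < x / (1 + x) < 1.
    by rewrite divr_gt0 //= ltr_pdivrMr // mul1r; lra.
  have := H _ ha.
  have -> : 1 - x / (1 + x) = (1 + x)^-1 by field.
  rewrite (eq_bigr (fun i : 'I_n.+1 => (e i * x ^+ i) / (1 + x) ^+ n)); last first.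
    move=> i _.
    rewrite expr_div_n -exprVn -mulrA; congr (_ * _).
    rewrite -mulrA; congr (_ * _).
    have hi : (i <= n)%N by rewrite -ltnS.
    by rewrite -exprD subnKC // exprVn.
  rewrite -mulr_suml -horner_poly => /eqP.
  by rewrite mulf_eq0 invr_eq0 expf_eq0 (negbTE x1n) andbF orbF => /eqP.
have P0 : P = 0.
  apply/eqP; apply/negPn/negP => nz.
  have := @max_poly_roots _ P [seq (i.+1)%:R | i <- iota 0 n.+1] nz.
  rewrite size_map size_iota.
  have -> : all (root P) [seq (i.+1)%:R | i <- iota 0 n.+1].
    apply/allP => y /mapP [i _ ->]; apply/eqP/HP; by rewrite ltr0Sn.
  rewrite map_inj_uniq ?iota_uniq; last first.
    by move=> u v /eqP; rewrite eqr_nat eqSS => /eqP.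
  move=> /(_ isT isT).
  by rewrite ltnNge size_poly.
move=> i lei. have := congr1 (fun p : {poly R} => p`_i) P0.
by rewrite coef_poly coef0 ltnS lei.
Qed.

Lemma L2 {R : realFieldType} n (d : nat -> R) :
  (forall a : R, 0 < a < 1 -> \sum_(i < n.+1) d i * Gf n.+1 a i = 0) ->
  forall i, (i <= n)%N -> d i = 0.
Proof.
move=> H i le.
pose e := (fun i => d i * ((n.+1 - i)%:R / (i`!%:R * (n.+1 - i)`!%:R))).
have He : forall a : R, 0 < a < 1 -> \sum_(i < n.+1) e i * (a ^+ i * (1 - a) ^+ (n - i)) = 0.
  move=> a ha; rewrite -[RHS](H a ha); apply: eq_bigr => j _.
  have a0 : a != 0 by apply: lt0r_neq0; case/andP: ha.
  have a1 : 1 - a != 0 by rewrite subr_eq0 eq_sym lt_eqF //; case/andP: ha.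
  have hj : (j <= n)%N by rewrite -ltnS.
  by rewrite GK // /e !mulrA.
have := @bern_indep R n e He i le; rewrite /e => /eqP.
rewrite mulf_eq0 => /orP [/eqP //|].
by rewrite mulf_eq0 invr_eq0 mulf_eq0 !(negbTE (fact_neq0 _)) pnatr_eq0 subn_eq0 leqNgt ltnS le.
Qed.
Lemma cov_row (R : realType) k m (t : 'I_m -> R) (pis : 'I_m -> 'S_k) (i : 'I_k) (f : 'I_k -> R) :
  \sum_j coverMx t pis i j * f j = \sum_l t l * f (pis l i).
Proof.
rewrite /coverMx.
under eq_bigr do rewrite summxE mulr_suml.
rewrite exchange_big /=; apply: eq_bigr => l _.
rewrite (bigD1 (pis l i)) //= big1 ?addr0; first by rewrite !mxE eqxx mulr1.
by move=> j nj; rewrite !mxE eq_sym (negbTE nj) mulr0 mul0r.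
Qed.

Lemma cov_col (R : realType) k m (t : 'I_m -> R) (pis : 'I_m -> 'S_k) (j : 'I_k) :
  \sum_i coverMx t pis i j = \sum_l t l.
Proof.
rewrite /coverMx.
under eq_bigr do rewrite summxE.
rewrite exchange_big /=; apply: eq_bigr => l _.
under eq_bigr do rewrite !mxE.
rewrite -big_distrr /=.
rewrite (reindex_inj (@perm_inj _ (pis l)^-1)) /=.
under eq_bigr do rewrite permKV.
by rewrite (bigD1 j) //= eqxx big1 ?addr0 ?mulr1 // => x /negbTE ->.
Qed.

Lemma gradP_dd (R : realType) N (pi : 'S_N.+1) (a b : R) :
  gradP pi a b = (N.+1)`!%:R * \sum_(i < N.+1) dd N a i * dd N b (pi i).
Proof.
rewrite /gradP; congr (_ * _); apply: eq_bigr => i _.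
rewrite /dd !subSS !subn0 !invfM.
ring.
Qed.

Theorem lemma10 (R : realType) (k m : nat) (t : 'I_m -> R) (pis : 'I_m -> 'S_k) :
  (forall a b : R, 0 < a < 1 -> 0 < b < 1 ->
     \sum_(l < m) t l * @gradP R k (pis l) a b = 0) ->
  forall i j i' j' : 'I_k, coverMx t pis i j = coverMx t pis i' j'.
Proof.
case: k pis => [|[|N]] pis H i j i' j'.
- by case: i.
- by rewrite !ord1.
set C := coverMx t pis.
pose c p q := C (inord p) (inord q).
have Cc : forall (p q : 'I_N.+2), C p q = c p q by move=> p q; rewrite /c !inord_val.
pose T := \sum_l t l.
have Hd : forall a b : R, 0 < a < 1 -> 0 < b < 1 ->
    \sum_(p < N.+2) (\sum_(q < N.+2) c p q * dd N.+1 b q) * dd N.+1 a p = 0.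
  move=> a b ha hb; have := H a b ha hb.
  under eq_bigr do rewrite gradP_dd mulrCA big_distrr /=.
  rewrite -big_distrr /= exchange_big /= => /eqP.
  rewrite mulf_eq0 (negbTE (fact_neq0 _)) /= => /eqP E; rewrite -[RHS]E.
  apply: eq_bigr => p _.
  under eq_bigr do rewrite -Cc.
  rewrite cov_row mulr_suml; apply: eq_bigr => l _; ring.
have Dl : forall p q, (p <= N)%N -> (q <= N)%N ->
    c p q - c p.+1 q - (c p q.+1 - c p.+1 q.+1) = 0.
  move=> p q hp hq.
  have Hb : forall b : R, 0 < b < 1 ->
      (\sum_(q < N.+2) c p q * dd N.+1 b q) - (\sum_(q < N.+2) c p.+1 q * dd N.+1 b q) = 0.
    move=> b hb.
    apply: (@L2 _ N (fun p => (\sum_(q < N.+2) c p q * dd N.+1 b q) - (\sum_(q < N.+2) c p.+1 q * dd N.+1 b q))) => // a ha.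
    have a0 : a != 0 by apply: lt0r_neq0; case/andP: ha.
    have a1 : 1 - a != 0 by rewrite subr_eq0 eq_sym lt_eqF //; case/andP: ha.
    rewrite -(Lsum _ (fun p => \sum_(q < N.+2) c p q * dd N.+1 b q)) //.
    rewrite -[RHS](Hd a b ha hb); apply: eq_bigr => ii _; done.
  apply: (@L2 _ N (fun q => c p q - c p.+1 q - (c p q.+1 - c p.+1 q.+1))) => // b hb.
  have b0 : b != 0 by apply: lt0r_neq0; case/andP: hb.
  have b1 : 1 - b != 0 by rewrite subr_eq0 eq_sym lt_eqF //; case/andP: hb.
  rewrite -(Lsum _ (fun q => c p q - c p.+1 q)) //.
  rewrite -[RHS](Hb b hb) -sumrB; apply: eq_bigr => ii _; by rewrite mulrBl.
have Add : forall p q, (p <= N.+1)%N -> (q <= N.+1)%N -> c p q = c p 0%N + c 0%N q - c 0%N 0%N.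
  elim=> [|p IHp] q hp hq; first by rewrite addrC addKr.
  elim: q hq => [|q IHq] hq; first by rewrite addrK.
  have := Dl p q hp hq.
  have := IHp q.+1 (ltnW hp) hq.
  have := IHp q (ltnW hp) (ltnW hq).
  have := IHq (ltnW hq).
  lra.
have row : forall p, (p <= N.+1)%N -> \sum_(q < N.+2) c p q = T.
  move=> p hp.
  have := @cov_row _ _ _ t pis (inord p) (fun _ => 1).
  under eq_bigr do rewrite mulr1.
  under [X in _ = X -> _]eq_bigr do rewrite mulr1.
  rewrite /T => <-; apply: eq_bigr => q _; by rewrite /c inord_val.
have col : forall q, (q <= N.+1)%N -> \sum_(p < N.+2) c p q = T.
  move=> q hq.
  rewrite /T -(@cov_col _ _ _ t pis (inord q)); apply: eq_bigr => p _; by rewrite /c inord_val.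
have Z : forall p, (p <= N.+1)%N -> c p 0%N = c 0%N 0%N.
  move=> p hp.
  have R1 := row p hp; have R0 := row 0%N isT.
  rewrite (eq_bigr (fun q : 'I_N.+2 => (c p 0%N - c 0%N 0%N) + c 0%N q)) in R1; last first.
    move=> q _; rewrite Add //; last by rewrite -ltnS.
    by rewrite addrAC.
  rewrite big_split /= sumr_const card_ord R0 -mulr_natr in R1.
  have : (c p 0%N - c 0%N 0%N) * (N.+2)%:R = 0 by lra.
  move/eqP; rewrite mulf_eq0 pnatr_eq0 orbF subr_eq0 => /eqP //.
have V : forall q, (q <= N.+1)%N -> c 0%N q = T / (N.+2)%:R.
  move=> q hq.
  have := col q hq.
  rewrite (eq_bigr (fun p : 'I_N.+2 => c 0%N q)); last first.
    move=> p _; have hp : (p <= N.+1)%N by rewrite -ltnS.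
    by rewrite Add // Z // addrAC subrr add0r.
  rewrite sumr_const card_ord => <-.
  by rewrite -[c 0%N q *+ _]mulr_natr mulfK // pnatr_eq0.
have Fin : forall (p q : 'I_N.+2), C p q = T / (N.+2)%:R.
  move=> p q; have hp : (p <= N.+1)%N by rewrite -ltnS.
  have hq : (q <= N.+1)%N by rewrite -ltnS.
  by rewrite Cc Add // Z // addrAC subrr add0r V.
by rewrite !Fin.
Qed.
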